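(* Let $r\ge2$, $n\ge1$, and let $\mathcal D$ be a Desarguesian $(n-1)$-spread of $\mathrm{PG}(rn-1,q)$. For each divisor $k$ of $n$, $\mathcal D$ has a unique Desarguesian $(k-1)$-subspread.
   Context: A $(t-1)$-spread of $\mathrm{PG}(N-1,q)$ is a partition of its point set into $(t-1)$-dimensional subspaces. A Desarguesian $(n-1)$-spread of $\mathrm{PG}(rn-1,q)$ is (up to collineation) the spread obtained by field reduction: viewing $V(r,q^n)$ as an $rn$-dimensional $\mathbb{F}_q$-vector space, each 1-dimensional $\mathbb{F}_{q^n}$-subspace becomes an $n$-dimensional $\mathbb{F}_q$-subspace, i.e. an $(n-1)$-dimensional projective subspace of $\mathrm{PG}(rn-1,q)$. For $k\mid n$, a $(k-1)$-subspread of an $(n-1)$-spread $\mathcal S$ of $\mathrm{PG}(rn-1,q)$ is a $(k-1)$-spread of $\mathrm{PG}(rn-1,q)$ that induces a $(k-1)$-spread in each element of $\mathcal S$. *)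

(* Defs.v *)
From HB Require Import structures.
From mathcomp Require Import all_boot all_order all_algebra all_fingroup all_field.
Set Implicit Arguments. Unset Strict Implicit. Unset Printing Implicit Defensive.
Import GRing.Theory.
Local Open Scope ring_scope.

(* PG(N-1,q) is modelled by the F-vector space 'rV[F]_N with #|F| = q;
   a (t-1)-dimensional projective subspace is a t-dimensional vector
   subspace, a point is a nonzero vector (up to scalars). *)

Definition is_spread (F : fieldType) (N t : nat)
    (S : pred {vspace 'rV[F]_N}) : Prop :=
  (forall U, S U -> \dim U = t) /\
  (forall v : 'rV[F]_N, v != 0 -> exists! U, S U /\ v \in U).

Definition is_spread_in (F : fieldType) (N t : nat) (W : {vspace 'rV[F]_N})
    (S : pred {vspace 'rV[F]_N}) : Prop :=
  (forall U, S U -> (U <= W)%VS /\ \dim U = t) /\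
  (forall v : 'rV[F]_N, v \in W -> v != 0 -> exists! U, S U /\ v \in U).

(* Desarguesian (t-1)-spread of PG(N-1,q): there are m with N = m t, a field
   extension L of F of degree t (L = F_{q^t}), and an F-linear bijection
   phi : L^m -> F^N (a collineation after field reduction) such that the
   elements of S are exactly the images of the 1-dimensional L-subspaces
   <x>_L = { c x : c in L }, x <> 0. *)
Definition desarguesian_spread (F : fieldType) (N t : nat)
    (S : pred {vspace 'rV[F]_N}) : Prop :=
  is_spread t S /\
  exists m : nat, N = (m * t)%N /\
  exists L : fieldExtType F, \dim (fullv : {vspace L}) = t /\
  exists phi : {ffun 'I_m -> L} -> 'rV[F]_N,
    linear phi /\ bijective phi /\
    forall U : {vspace 'rV[F]_N},
      S U <-> exists2 x : {ffun 'I_m -> L}, x != 0 &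
                forall v : 'rV[F]_N,
                  v \in U <-> exists c : L, v = phi [ffun i => c * x i].

Definition is_subspread (F : fieldType) (N k : nat)
    (D S : pred {vspace 'rV[F]_N}) : Prop :=
  is_spread k S /\
  forall W, D W -> is_spread_in k W [pred U | S U && (U <= W)%VS].

(* Main.v *)
Require Import Defs.
From HB Require Import structures.
From mathcomp Require Import all_boot all_order all_algebra all_fingroup all_field.
From Stdlib Require Import Classical ClassicalEpsilon.
Set Implicit Arguments. Unset Strict Implicit. Unset Printing Implicit Defensive.
Import GRing.Theory.
Import VectorInternalTheory.
Local Open Scope ring_scope.
Lemma ffun0E (T : finType) (R : zmodType) (i : T) : (0 : {ffun T -> R}) i = 0.
Proof. by rewrite ffunE. Qed.

Lemma ffun_nz (T : finType) (R : zmodType) (x : {ffun T -> R}) :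
  x != 0 -> exists i, x i != 0.
Proof.
move=> nz; apply/existsP; apply: contraR nz; rewrite negb_exists => /forallP h.
by apply/eqP/ffunP => i; rewrite ?ffun0E ?ffunE; apply/eqP; move: (h i); rewrite negbK.
Qed.

Definition smul (L : fieldType) m (c : L) (x : {ffun 'I_m -> L}) : {ffun 'I_m -> L} :=
  [ffun i => c * x i].

Lemma smulA (L : fieldType) m (c d : L) (x : {ffun 'I_m -> L}) :
  smul c (smul d x) = smul (c * d) x.
Proof. by apply/ffunP => i; rewrite !ffunE mulrA. Qed.

Lemma smul1 (L : fieldType) m (x : {ffun 'I_m -> L}) : smul 1 x = x.
Proof. by apply/ffunP => i; rewrite !ffunE mul1r. Qed.

Lemma smul0 (L : fieldType) m (c : L) : smul c (0 : {ffun 'I_m -> L}) = 0.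
Proof. by apply/ffunP => i; rewrite !ffunE ?ffun0E mulr0. Qed.

Lemma smul0l (L : fieldType) m (x : {ffun 'I_m -> L}) : smul 0 x = 0.
Proof. by apply/ffunP => i; rewrite !ffunE ?ffun0E mul0r. Qed.

Lemma smulD (L : fieldType) m (c : L) (x y : {ffun 'I_m -> L}) :
  smul c (x + y) = smul c x + smul c y.
Proof. by apply/ffunP => i; rewrite !ffunE mulrDr. Qed.

Lemma smulDl (L : fieldType) m (c d : L) (x : {ffun 'I_m -> L}) :
  smul (c + d) x = smul c x + smul d x.
Proof. by apply/ffunP => i; rewrite !ffunE mulrDl. Qed.

Lemma smul_inj (L : fieldType) m (c d : L) (x : {ffun 'I_m -> L}) :
  x != 0 -> smul c x = smul d x -> c = d.
Proof.
move=> /ffun_nz [i xi] /ffunP /(_ i); rewrite !ffunE.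
by move/(mulIf xi).
Qed.

Lemma smul_eq0 (L : fieldType) m (c : L) (x : {ffun 'I_m -> L}) :
  x != 0 -> smul c x = 0 -> c = 0.
Proof. by move=> nz; rewrite -(smul0l x); apply: smul_inj. Qed.

Lemma lin_add (F : fieldType) (U V : lmodType F) (f : U -> V) :
  linear f -> forall x y, f (x + y) = f x + f y.
Proof. by move=> lf x y; have := lf 1 x y; rewrite !scale1r. Qed.

Lemma lin_0 (F : fieldType) (U V : lmodType F) (f : U -> V) :
  linear f -> f 0 = 0.
Proof.
by move=> lf; apply: (addrI (f 0)); rewrite addr0 -(lin_add lf) addr0.
Qed.

Lemma smul_lin (F : fieldType) (L : fieldExtType F) m (x : {ffun 'I_m -> L}) :
  linear (fun c : L => smul c x).
Proof.
by move=> a c d; apply/ffunP => i; rewrite !ffunE mulrDl scalerAl.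
Qed.
Lemma line_space (F : fieldType) (N m : nat) (L : fieldExtType F)
  (phi : {ffun 'I_m -> L} -> 'rV[F]_N) (x : {ffun 'I_m -> L}) :
  linear phi -> injective phi -> x != 0 ->
  exists U : {vspace 'rV[F]_N},
    (forall v, v \in U <-> exists c, v = phi (smul c x)) /\ \dim U = \dim {:L}.
Proof.
move=> lphi iphi nzx.
pose f := fun c : L => phi (smul c x).
have lf : linear f.
  by move=> a c d; rewrite /f (smul_lin x) lphi.
pose fL : {linear L -> 'rV[F]_N} := HB.pack f (GRing.isLinear.Build _ _ _ _ f lf).
exists (linfun fL @: fullv)%VS; split.
  move=> v; split.
    by case/memv_imgP => c _ ->; exists c; rewrite lfunE.
  by case=> c ->; apply/memv_imgP; exists c; rewrite ?memvf ?lfunE.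
apply: limg_dim_eq.
have /eqP -> : lker (linfun fL) == 0%VS.
  apply/lker0P => c d; rewrite !lfunE /= /f => /iphi.
  exact: smul_inj.
by rewrite capv0.
Qed.

Definition dchar (F : fieldType) (N m : nat) (L : fieldExtType F)
  (phi : {ffun 'I_m -> L} -> 'rV[F]_N) (x : {ffun 'I_m -> L}) (U : {vspace 'rV[F]_N}) :=
  forall v, v \in U <-> exists c : L, v = phi [ffun i => c * x i].

Lemma dchar_prop (F : fieldType) (N m : nat) (L : fieldExtType F)
  (phi : {ffun 'I_m -> L} -> 'rV[F]_N) (x y : {ffun 'I_m -> L}) (c : L) U :
  c != 0 -> y = smul c x -> dchar phi x U -> dchar phi y U.
Proof.
move=> nzc -> hU v; rewrite hU; split.
  case=> d ->; exists (d / c); congr (phi _); apply/ffunP => i.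
  by rewrite !ffunE mulrA mulfVK.
by case=> e ->; exists (e * c); congr (phi _); apply/ffunP => i; rewrite !ffunE mulrA.
Qed.

Lemma dchar_eq (F : fieldType) (N m : nat) (L : fieldExtType F)
  (phi : {ffun 'I_m -> L} -> 'rV[F]_N) x U1 U2 :
  dchar phi x U1 -> dchar phi x U2 -> U1 = U2.
Proof.
move=> h1 h2; apply/vspaceP => v; apply/idP/idP => h.
  by apply: (proj2 (h2 v)); apply: (proj1 (h1 v)).
by apply: (proj2 (h1 v)); apply: (proj1 (h2 v)).
Qed.

Lemma desarg_spread (F : fieldType) (N m : nat) (L : fieldExtType F)
  (phi : {ffun 'I_m -> L} -> 'rV[F]_N) (S : pred {vspace 'rV[F]_N}) :
  linear phi -> bijective phi ->
  (forall U, S U <-> exists2 x, x != 0 & dchar phi x U) ->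
  is_spread (\dim {:L}) S.
Proof.
move=> lphi bphi hS; have iphi := bij_inj bphi.
case: bphi => g phiK gK.
split.
  move=> U /hS [x nzx hU].
  have [U' [hU' <-]] := line_space lphi iphi nzx.
  by congr (\dim _); apply: (dchar_eq hU).
move=> v nzv.
have nzx : g v != 0.
  by apply: contra nzv => /eqP h; rewrite -[v]gK h (lin_0 lphi).
have [U [hU _]] := line_space lphi iphi nzx.
exists U; split.
  split; first by apply/hS; exists (g v).
  by apply/hU; exists 1; rewrite smul1 gK.
move=> U2 [/hS [x2 nzx2 hU2] vU2].
have [c vc] := (hU2 v).1 vU2.
have e : g v = smul c x2 by rewrite vc phiK.
have nzc : c != 0 by apply: contra nzx => /eqP c0; rewrite e c0 smul0l.
apply: (dchar_eq (x := g v)) => //.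
exact: dchar_prop nzc e hU2.
Qed.

Definition ed (L : fieldType) m (j : 'I_m) : {ffun 'I_m -> L} := [ffun i => (i == j)%:R].

Lemma ed_nz (L : fieldType) m (j : 'I_m) : ed L j != 0.
Proof.
apply/eqP => /ffunP /(_ j); rewrite !ffunE eqxx => /eqP; rewrite oner_eq0.
done.
Qed.

Lemma stab (F : fieldType) (N m : nat) (L : fieldExtType F)
  (phi : {ffun 'I_m -> L} -> 'rV[F]_N) (g : 'rV[F]_N -> {ffun 'I_m -> L})
  (D : pred {vspace 'rV[F]_N}) :
  linear phi -> cancel phi g -> cancel g phi -> (1 < m)%N ->
  (forall v, v != 0 -> exists U, D U /\ v \in U) ->
  (forall U, D U -> exists2 x, x != 0 & dchar phi x U) ->
  forall T : 'rV[F]_N -> 'rV[F]_N, (forall u w, T (u + w) = T u + T w) ->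
  (forall U, D U -> forall v, v \in U -> T v \in U) ->
  exists lam : L, forall v, T v = phi (smul lam (g v)).
Proof.
move=> lphi phiK gK m2 Dcov Dchar T Tadd Tstab.
have iphi : injective phi := can_inj phiK.
have gadd u w : g (u + w) = g u + g w.
  by apply: iphi; rewrite (lin_add lphi) !gK.
pose T' x := g (T (phi x)).
have T'add x y : T' (x + y) = T' x + T' y.
  by rewrite /T' (lin_add lphi) Tadd gadd.
have step1 x : x != 0 -> exists a, T' x = smul a x.
  move=> nzx.
  have nzv : phi x != 0.
    by apply: contra nzx => /eqP h; apply/eqP; apply: iphi; rewrite h (lin_0 lphi).
  have [U [DU vU]] := Dcov _ nzv.
  have [x' nzx' hU] := Dchar U DU.
  have [c ec] := (hU _).1 vU.
  have [c' ec'] := (hU _).1 (Tstab U DU _ vU).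
  have ex : x = smul c x' by apply: iphi; rewrite ec.
  have nzc : c != 0 by apply: contra nzx => /eqP c0; rewrite ex c0 smul0l.
  exists (c' / c); rewrite /T' ec' phiK ex smulA mulfVK //.
have H x z a b : x != 0 -> z != 0 -> ~ (exists c, x = smul c z) ->
    T' x = smul a x -> T' z = smul b z -> a = b.
  move=> nzx nzz nprop ha hb.
  have nzxz : x + z != 0.
    apply/negP => /eqP h; apply: nprop; exists (-1).
    apply/ffunP => i; rewrite !ffunE mulN1r; apply/eqP; rewrite -addr_eq0.
    by move/ffunP: h => /(_ i); rewrite !ffunE => ->.
  have [d hd] := step1 _ nzxz.
  have E i : (d - a) * x i = (b - d) * z i.
    move: hd; rewrite T'add ha hb => /ffunP /(_ i); rewrite !ffunE.
    move=> h; rewrite !mulrBl mulrDr in h *; apply/eqP; rewrite subr_eq addrAC.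
    by rewrite eq_sym subr_eq addrC h addrC.
  have da : d = a.
    case: (eqVneq d a) => [//|nda]; exfalso; apply: nprop.
    have nz : d - a != 0 by rewrite subr_eq0.
    exists ((b - d) / (d - a)); apply/ffunP => i; rewrite ffunE.
    by rewrite mulrAC -E mulrAC mulfV // mul1r.
  have : b - d = 0.
    apply: (smul_eq0 nzz); apply/ffunP => i; rewrite !ffunE -E da subrr mul0r.
    by [].
  by move/eqP; rewrite subr_eq0 da => /eqP.
pose i0 : 'I_m := Ordinal (ltnW m2).
pose i1 : 'I_m := Ordinal m2.
have [l0 hl0] := step1 _ (ed_nz L i0).
have [l1 hl1] := step1 _ (ed_nz L i1).
have l10 : l1 = l0.
  apply: (H _ _ _ _ (ed_nz L i1) (ed_nz L i0)) => //.
  case=> c /ffunP /(_ i1); rewrite !ffunE eqxx /= mulr0 => /eqP.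
  by rewrite oner_eq0.
have main x : T' x = smul l0 x.
  have [-> | nzx] := eqVneq x 0.
    have : T' 0 = 0.
      by apply: (addrI (T' 0)); rewrite -T'add !addr0.
    by move=> ->; rewrite smul0.
  have [a ha] := step1 _ nzx.
  rewrite ha; congr smul.
  case: (classic (exists c, x = smul c (ed L i0))) => [[c ec] | np].
    have nzc : c != 0 by apply: contra nzx => /eqP c0; rewrite ec c0 smul0l.
    rewrite -l10; apply: (H _ _ _ _ nzx (ed_nz L i1)) => //.
    case=> c' /ffunP /(_ i0); rewrite ec !ffunE eqxx /=.
    by rewrite mulr1 mulr0 => /eqP; rewrite (negbTE nzc).
  exact: (H _ _ _ _ nzx (ed_nz L i0)).
exists l0 => v.
by rewrite -main /T' !gK.
Qed.

Lemma sub_lam (F : finFieldType) (N r : nat) (L : fieldExtType F)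
  (phi : {ffun 'I_r -> L} -> 'rV[F]_N) (g : 'rV[F]_N -> {ffun 'I_r -> L})
  (D : pred {vspace 'rV[F]_N})
  (K : fieldExtType F) (m : nat) (psi : {ffun 'I_m -> K} -> 'rV[F]_N)
  (h : 'rV[F]_N -> {ffun 'I_m -> K}) (S : pred {vspace 'rV[F]_N}) :
  linear phi -> cancel phi g -> cancel g phi -> (1 < r)%N ->
  (forall v, v != 0 -> exists U, D U /\ v \in U) ->
  (forall U, D U -> exists2 x, x != 0 & dchar phi x U) ->
  linear psi -> cancel psi h -> cancel h psi -> (0 < m)%N ->
  (forall U, S U -> exists2 x, x != 0 & dchar psi x U) ->
  (forall W, D W -> forall v, v \in W -> v != 0 ->
       exists U, [/\ S U, (U <= W)%VS & v \in U]) ->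
  exists lamf : K -> L, [/\ injective lamf,
     (forall a v, psi (smul a (h v)) = phi (smul (lamf a) (g v))) &
     (forall a, lamf a ^+ (#|F| ^ \dim {:K}) = lamf a)].
Proof.
move=> lphi phiK gK r2 Dcov Dchar lpsi psiK hK m0 Schar Ssub.
have ipsi : injective psi := can_inj psiK.
have iphi : injective phi := can_inj phiK.
have hadd u w : h (u + w) = h u + h w.
  by apply: ipsi; rewrite (lin_add lpsi) !hK.
have h0 : h 0 = 0 by apply: ipsi; rewrite hK (lin_0 lpsi).
have G1 a : exists lam : L, forall v, psi (smul a (h v)) = phi (smul lam (g v)).
  apply: (stab lphi phiK gK r2 Dcov Dchar).
    by move=> u w; rewrite hadd smulD (lin_add lpsi).
  move=> W DW v vW.
  have [-> | nzv] := eqVneq v 0.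
    by rewrite h0 smul0 (lin_0 lpsi) mem0v.
  have [U [SU UW vU]] := Ssub W DW v vW nzv.
  have [x nzx hU] := Schar U SU.
  have [c ec] := (hU v).1 vU.
  apply: (subvP UW); apply/(hU _).2; exists (a * c).
  by rewrite ec psiK -/(smul c x) smulA.
pose lamf a := proj1_sig (constructive_indefinite_description _ (G1 a)).
have lamfP a v : psi (smul a (h v)) = phi (smul (lamf a) (g v)).
  by rewrite /lamf; case: (constructive_indefinite_description _ _).
pose j0 : 'I_m := Ordinal m0.
pose i0 : 'I_r := Ordinal (ltnW r2).
have nuinj l1 l2 : (forall v, phi (smul l1 (g v)) = phi (smul l2 (g v))) -> l1 = l2.
  move=> /(_ (phi (ed L i0))); rewrite phiK => /iphi.
  exact: smul_inj (ed_nz L i0).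
exists lamf; split.
- move=> a b e.
  have := lamfP a (psi (ed K j0)); rewrite e -lamfP psiK => /ipsi.
  exact: smul_inj (ed_nz K j0).
- exact: lamfP.
move=> a.
have pw e v : phi (smul (lamf a ^+ e) (g v)) = psi (smul (a ^+ e) (h v)).
  elim: e v => [|e IH] v.
    by rewrite !expr0 !smul1 gK hK.
  rewrite !exprS -!smulA.
  have -> : smul (lamf a ^+ e) (g v) = g (phi (smul (lamf a ^+ e) (g v))) by rewrite phiK.
  rewrite IH -lamfP.
  by rewrite psiK.
apply: nuinj => v.
rewrite pw.
have -> : a ^+ (#|F| ^ \dim {:K}) = a.
  by apply/eqP; rewrite -(Fermat's_little_theorem (aspacef K)) memvf.
by rewrite lamfP.
Qed.

Lemma card_fin_ext (F : finFieldType) (K : fieldExtType F) :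
  #|finvect_type K| = (#|F| ^ \dim {:K})%N.
Proof.
have := @card_vspace F (finvect_type K) (Vector.class (finvect_type K : vectType F)) fullv.
by rewrite -(@card_vspacef F (finvect_type K) (Vector.class (finvect_type K : vectType F))).
Qed.

Lemma roots_bound (F : finFieldType) (L : fieldExtType F) (Q : nat) (s : seq L) :
  (1 < Q)%N -> uniq s -> (forall x, x \in s -> x ^+ Q = x) -> (size s <= Q)%N.
Proof.
move=> Q1 us hs.
pose p : {poly L} := 'X^Q - 'X.
have sp : size p = Q.+1.
  rewrite /p size_addl ?size_polyXn // size_opp size_polyX ltnS //.
have pnz : p != 0 by rewrite -size_poly_eq0 sp.
have := max_poly_roots pnz _ us; rewrite sp ltnS; apply.
apply/allP => x xs; rewrite /root /p !hornerE hs // subrr //.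
Qed.

Lemma corr (F : finFieldType) (N r : nat) (L : fieldExtType F)
  (phi : {ffun 'I_r -> L} -> 'rV[F]_N) (g : 'rV[F]_N -> {ffun 'I_r -> L})
  (D : pred {vspace 'rV[F]_N})
  (K1 : fieldExtType F) (m1 : nat) (psi1 : {ffun 'I_m1 -> K1} -> 'rV[F]_N)
  (h1 : 'rV[F]_N -> {ffun 'I_m1 -> K1}) (S1 : pred {vspace 'rV[F]_N})
  (K2 : fieldExtType F) (m2 : nat) (psi2 : {ffun 'I_m2 -> K2} -> 'rV[F]_N)
  (h2 : 'rV[F]_N -> {ffun 'I_m2 -> K2}) (S2 : pred {vspace 'rV[F]_N}) :
  linear phi -> cancel phi g -> cancel g phi -> (1 < r)%N ->
  (forall v, v != 0 -> exists U, D U /\ v \in U) ->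
  (forall U, D U -> exists2 x, x != 0 & dchar phi x U) ->
  linear psi1 -> cancel psi1 h1 -> cancel h1 psi1 -> (0 < m1)%N ->
  (forall U, S1 U -> exists2 x, x != 0 & dchar psi1 x U) ->
  (forall W, D W -> forall v, v \in W -> v != 0 ->
       exists U, [/\ S1 U, (U <= W)%VS & v \in U]) ->
  linear psi2 -> cancel psi2 h2 -> cancel h2 psi2 -> (0 < m2)%N ->
  (forall U, S2 U -> exists2 x, x != 0 & dchar psi2 x U) ->
  (forall W, D W -> forall v, v \in W -> v != 0 ->
       exists U, [/\ S2 U, (U <= W)%VS & v \in U]) ->
  \dim {:K1} = \dim {:K2} ->
  forall a2 : K2, exists a1 : K1, forall v,
    psi2 (smul a2 (h2 v)) = psi1 (smul a1 (h1 v)).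
Proof.
move=> lphi phiK gK r2 Dcov Dchar lpsi1 psiK1 hK1 m10 Schar1 Ssub1
  lpsi2 psiK2 hK2 m20 Schar2 Ssub2 edim a2.
have [f1 [inj1 P1 pow1]] :=
  sub_lam lphi phiK gK r2 Dcov Dchar lpsi1 psiK1 hK1 m10 Schar1 Ssub1.
have [f2 [inj2 P2 pow2]] :=
  sub_lam lphi phiK gK r2 Dcov Dchar lpsi2 psiK2 hK2 m20 Schar2 Ssub2.
set Q := (#|F| ^ \dim {:K1})%N.
have Q1 : (1 < Q)%N.
  have kpos : (0 < \dim {:K1})%N := adim_gt0 (aspacef K1).
  apply: (leq_trans (finNzRing_gt1 F)).
  by rewrite /Q -{1}(expn1 #|F|) leq_exp2l // finNzRing_gt1.
pose s1 := map f1 (enum (finvect_type K1)).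
have us1 : uniq s1 by rewrite (map_inj_uniq inj1) (enum_uniq (finvect_type K1)).
have ss1 : size s1 = Q.
  rewrite size_map /Q -card_fin_ext; exact: (esym (cardE _)).
have : f2 a2 \in s1.
  apply/negPn/negP => nin.
  have hb : (size (f2 a2 :: s1) <= Q)%N.
    apply: (roots_bound Q1); first by rewrite /= nin us1.
    move=> x; rewrite inE => /orP [/eqP -> | /mapP [b _ ->]].
      by rewrite /Q edim pow2.
    exact: pow1.
  by move: hb; rewrite /= ss1 ltnn.
case/mapP => a1 _ e.
by exists a1 => v; rewrite P1 P2 e.
Qed.

Lemma subspread_sub (F : fieldType) (N k : nat) (D S : pred {vspace 'rV[F]_N}) :
  is_subspread k D S ->
  (forall W, D W -> forall v, v \in W -> v != 0 ->
       exists U, [/\ S U, (U <= W)%VS & v \in U]).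
Proof.
case=> _ h W DW v vW nzv.
have [_ h2] := h W DW.
have [U [[/andP [SU UW] vU] _]] := h2 v vW nzv.
by exists U.
Qed.

Lemma dir (F : finFieldType) (r n k : nat) (D S1 S2 : pred {vspace 'rV[F]_(r * n)}) :
  (1 < r)%N -> (0 < n)%N ->
  desarguesian_spread n D ->
  desarguesian_spread k S1 -> is_subspread k D S1 ->
  desarguesian_spread k S2 -> is_subspread k D S2 ->
  forall U, S1 U -> S2 U.
Proof.
move=> r1 n0 [[_ Dcov1] [m [em [L [dL [phi [lphi [bphi hD]]]]]]]].
have emr : m = r.
  by apply/eqP; rewrite -(eqn_pmul2r n0) em.
subst m; move=> hD1 ss1 hD2 ss2.
case: hD1 => [_ [m1 [em1 [K1 [dK1 [psi1 [lpsi1 [bpsi1 hS1]]]]]]]].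
case: hD2 => [_ [m2 [em2 [K2 [dK2 [psi2 [lpsi2 [bpsi2 hS2]]]]]]]].
case: bphi => g phiK gK.
case: bpsi1 => h1 psiK1 hK1.
case: bpsi2 => h2 psiK2 hK2.
have Dcov v : v != 0 -> exists U, D U /\ v \in U.
  by move=> nzv; have [U [hU _]] := Dcov1 v nzv; exists U.
have Dchar U : D U -> exists2 x, x != 0 & dchar phi x U by move/hD.
have Schar1 U : S1 U -> exists2 x, x != 0 & dchar psi1 x U by move/hS1.
have Schar2 U : S2 U -> exists2 x, x != 0 & dchar psi2 x U by move/hS2.
have rn0 : (0 < r * n)%N by rewrite muln_gt0 n0 (ltnW r1).
have m10 : (0 < m1)%N by move: rn0; rewrite em1; case: (m1).
have m20 : (0 < m2)%N by move: rn0; rewrite em2; case: (m2).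
have c21 := corr lphi phiK gK r1 Dcov Dchar lpsi1 psiK1 hK1 m10 Schar1
  (subspread_sub ss1) lpsi2 psiK2 hK2 m20 Schar2 (subspread_sub ss2)
  (etrans dK1 (esym dK2)).
have c12 := corr lphi phiK gK r1 Dcov Dchar lpsi2 psiK2 hK2 m20 Schar2
  (subspread_sub ss2) lpsi1 psiK1 hK1 m10 Schar1 (subspread_sub ss1)
  (etrans dK2 (esym dK1)).
move=> U /Schar1 [x1 nzx1 hU].
apply/hS2; exists (h2 (psi1 x1)).
  apply: contra nzx1 => /eqP e.
  by rewrite -[x1]psiK1 -[psi1 x1]hK2 e (lin_0 lpsi2) -(lin_0 lpsi1) psiK1.
move=> v; rewrite hU; split.
  case=> c1 ->; have [c2 e] := c12 c1.
  exists c2; have := e (psi1 x1); rewrite psiK1 => ->.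
  done.
case=> c2 ->; have [c1 e] := c21 c2.
exists c1; have := e (psi1 x1); rewrite psiK1 => ->.
done.
Qed.
Local Open Scope group_scope.
Lemma exists_subfield (F : finFieldType) (L : fieldExtType F) (k : nat) :
  (k %| \dim {:L})%N -> exists K : {subfield L}, \dim K = k.
Proof.
move=> kdvd.
pose gL := FinSplittingFieldType F L.
have [alpha gen _] := finField_galois_generator (sub1v (fullv : {vspace gL})).
have galF : galois 1 (fullv : {vspace gL}) := finField_galois (sub1v _).
have cardG : #|'Gal((fullv : {vspace gL}) / 1)| = \dim (fullv : {vspace gL}).
  by rewrite -galois_dim // dimv1 divn1.
have oalpha : #[alpha]%g = \dim (fullv : {vspace gL}).
  by rewrite orderE -cardG; move/eqP: gen => ->.
pose H := <[(alpha ^+ k)%g]>%G.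
have oH : #|H| = (\dim (fullv : {vspace gL}) %/ k)%N.
  by rewrite -orderE cyclic.orderXdiv oalpha.
exists (fixedField_aspace (H : {set _}) : {subfield L}).
have := dim_fixedField H; rewrite oH.
have dvd : (\dim (fixedField H) %| \dim (fullv : {vspace gL}))%N.
  by apply: field_dimS; apply: subvf.
have npos : (0 < \dim (fullv : {vspace gL}))%N by apply: adim_gt0.
move=> e.
have kpos : (0 < k)%N.
  by move: kdvd npos; case: (k) => //; rewrite dvd0n => /eqP ->.
have dpos : (0 < \dim (fixedField H))%N by apply: adim_gt0.
move: dvd e kdvd.
move: (\dim (fixedField H)) dpos => d dpos.
move: (\dim (fullv : {vspace gL})) npos => n npos.
move=> /dvdnP [a ha] e /dvdnP [b hb].
have e1 : (n %/ k = b)%N by rewrite hb mulnK.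
have e2 : (n %/ d = a)%N by rewrite ha mulnK.
have eab : a = b by rewrite -e1 -e2 e.
have bpos : (0 < b)%N by move: npos; rewrite hb; case: (b).
apply/eqP; rewrite -(eqn_pmul2l bpos). by rewrite -hb -eab -ha.
Qed.
Local Close Scope group_scope.

Notation vTo K r := {ffun 'I_r -> fieldOver K}.

Definition beta (F : finFieldType) (L : fieldExtType F) (K : {subfield L}) (r : nat)
  (y : {ffun 'I_(dim (vTo K r)) -> subvs_of K}) : {ffun 'I_r -> L} :=
  VectorInternalTheory.r2v (\row_i y i : 'rV[subvs_of K]_(dim (vTo K r))) : vTo K r.

Definition betainv (F : finFieldType) (L : fieldExtType F) (K : {subfield L}) (r : nat)
  (x : {ffun 'I_r -> L}) : {ffun 'I_(dim (vTo K r)) -> subvs_of K} :=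
  [ffun i => VectorInternalTheory.v2r (x : vTo K r) 0 i].

Lemma betaK (F : finFieldType) (L : fieldExtType F) (K : {subfield L}) (r : nat) :
  cancel (@beta F L K r) (@betainv F L K r).
Proof.
move=> y; apply/ffunP => i; rewrite /beta /betainv ffunE.
by rewrite VectorInternalTheory.r2vK mxE.
Qed.

Lemma betainvK (F : finFieldType) (L : fieldExtType F) (K : {subfield L}) (r : nat) :
  cancel (@betainv F L K r) (@beta F L K r).
Proof.
move=> x; rewrite /beta /betainv.
have -> : (\row_i [ffun i0 => VectorInternalTheory.v2r (x : vTo K r) 0 i0] i)
   = VectorInternalTheory.v2r (x : vTo K r).
  by apply/rowP => i; rewrite mxE ffunE.
by rewrite VectorInternalTheory.v2rK.
Qed.

Lemma beta_smul (F : finFieldType) (L : fieldExtType F) (K : {subfield L}) (r : nat)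
  (c : subvs_of K) y : beta (smul c y) = smul (vsval c) (@beta F L K r y).
Proof.
rewrite /beta.
have -> : (\row_i (smul c y) i) = c *: (\row_i y i : 'rV[subvs_of K]_(dim (vTo K r))).
  by apply/rowP => i; rewrite !mxE ffunE.
rewrite linearZ /=.
by apply/ffunP => j; rewrite !ffunE.
Qed.

Lemma beta_add (F : finFieldType) (L : fieldExtType F) (K : {subfield L}) (r : nat)
  y z : beta (y + z) = @beta F L K r y + beta z.
Proof.
rewrite /beta.
have -> : (\row_i (y + z) i) = (\row_i y i : 'rV[subvs_of K]_(dim (vTo K r))) + \row_i z i.
  by apply/rowP => i; rewrite !mxE ffunE.
by rewrite linearD.
Qed.

Lemma beta_lin (F : finFieldType) (L : fieldExtType F) (K : {subfield L}) (r : nat) :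
  linear (@beta F L K r).
Proof.
move=> a y z; rewrite beta_add; congr (_ + _).
have -> : a *: y = smul (a%:A : subvs_of K) y.
  by apply/ffunP => i; rewrite !ffunE mulr_algl.
rewrite beta_smul.
have -> : vsval (a%:A : subvs_of K) = a%:A.
  by rewrite linearZ /= algid1.
by apply/ffunP => i; rewrite !ffunE mulr_algl.
Qed.

Lemma dimLF (F : finFieldType) (L : fieldExtType F) (K : {subfield L}) :
  dim (fieldOver K) = (\dim {:L} %/ \dim K)%N.
Proof.
rewrite -dimvf.
have -> : (fullv : {vspace fieldOver K}) = vspaceOver K fullv.
  apply/vspaceP => x; rewrite memvf mem_vspaceOver.
  have := memv_mul (mem1v K) (memvf (x : L)); rewrite mul1r; exact.
by rewrite dim_vspaceOver ?subvf.
Qed.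

Lemma dimvT (F : finFieldType) (L : fieldExtType F) (K : {subfield L}) (r : nat) :
  dim (vTo K r) = (r * (\dim {:L} %/ \dim K))%N.
Proof.
change ((#|'I_r| * dim (fieldOver K))%N = (r * (\dim {:L} %/ \dim K))%N).
by rewrite card_ord dimLF.
Qed.

Lemma existence (F : finFieldType) (r n k : nat) (D : pred {vspace 'rV[F]_(r * n)}) :
  (1 < r)%N -> (0 < n)%N -> desarguesian_spread n D -> (k %| n)%N ->
  exists S : pred {vspace 'rV[F]_(r * n)},
    desarguesian_spread k S /\ is_subspread k D S.
Proof.
move=> r1 n0 [[_ Dcov1] [m [em [L [dL [phi [lphi [bphi hD]]]]]]]] kn.
have emr : m = r by apply/eqP; rewrite -(eqn_pmul2r n0) em.
subst m.
have kL : (k %| \dim {:L})%N by rewrite dL.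
have [K dK] := exists_subfield kL.
set M := dim (vTo K r).
pose psi (y : {ffun 'I_M -> subvs_of K}) : 'rV[F]_(r * n) := phi (beta y).
pose P U := exists2 y : {ffun 'I_M -> subvs_of K}, y != 0 & dchar psi y U.
pose S : pred {vspace 'rV[F]_(r * n)} :=
  fun U => if excluded_middle_informative (P U) then true else false.
have hS U : S U <-> P U.
  by rewrite /S; case: excluded_middle_informative.
have lpsi : linear psi.
  by move=> a y z; rewrite /psi beta_lin lphi.
case: bphi => g phiK gK.
have iphi : injective phi := can_inj phiK.
have bpsi : bijective psi.
  exists (fun v => @betainv F L K r (g v)) => [y | v]; rewrite /psi.
    by rewrite phiK betaK.
  by rewrite betainvK gK.
have dKF : \dim {: subvs_of K} = k by rewrite dimvf.
have spS : is_spread k S by rewrite -dKF; apply: desarg_spread lpsi bpsi hS.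
have desS : desarguesian_spread k S.
  split => //; exists M; split.
    have /dvdnP [b hb] := kn.
    rewrite /M dimvT dL dK hb mulnK; last by move: n0; rewrite hb; case: (k); rewrite ?muln0.
    by rewrite mulnA.
  exists (subvs_of K); split => //; exists psi; split => //; split => //.
exists S; split => //; split => // W DW.
have [x nzx hW] := (hD W).1 DW.
split.
  move=> U /andP [SU UW]; split => //.
  by apply: spS.1.
move=> v vW nzv.
have [U [[SU vU] Uuniq]] := spS.2 v nzv.
have UW : (U <= W)%VS.
  have [y nzy hU] := (hS U).1 SU.
  have [d ed] := (hW v).1 vW.
  have [c ec] := (hU v).1 vU.
  have e1 : smul (vsval c) (beta y) = smul d x.
    by apply: iphi; rewrite -beta_smul -ed; exact: esym ec.
  have nzc : vsval c != 0.
    apply: contra nzv => /eqP c0; rewrite ec.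
    change (phi (beta (smul c y)) == 0); rewrite beta_smul c0 smul0l.
    by rewrite (lin_0 lphi).
  have e2 : beta y = smul (d / vsval c) x.
    by rewrite -[beta y]smul1 -(mulVf nzc) -smulA e1 smulA mulrC.
  apply/subvP => u uU.
  have [e ee] := (hU u).1 uU.
  apply/(hW u).2; exists (vsval e * (d / vsval c)).
  rewrite ee; change (phi (beta (smul e y)) = phi (smul (vsval e * (d / vsval c)) x)).
  by rewrite beta_smul e2 smulA.
exists U; split.
  by split => //; apply/andP; split.
by move=> U' [/andP [SU' _] vU']; apply: Uuniq.
Qed.

Theorem corollary2p11 (F : finFieldType) (r n : nat)
    (D : pred {vspace 'rV[F]_(r * n)}) :
  (2 <= r)%N -> (1 <= n)%N ->
  desarguesian_spread n D ->
  forall k : nat, (k %| n)%N ->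
    (exists S : pred {vspace 'rV[F]_(r * n)},
        desarguesian_spread k S /\ is_subspread k D S) /\
    (forall S1 S2 : pred {vspace 'rV[F]_(r * n)},
        desarguesian_spread k S1 -> is_subspread k D S1 ->
        desarguesian_spread k S2 -> is_subspread k D S2 ->
        S1 =i S2).
Proof.
move=> r2 n1 hD k kn; split; first exact: existence.
move=> S1 S2 d1 s1 d2 s2 U; apply/idP/idP => h.
  exact: (dir r2 n1 hD d1 s1 d2 s2).
exact: (dir r2 n1 hD d2 s2 d1 s1).
Qed.
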